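(* Let $H$ be a complex Hilbert space with inner product $\langle\cdot,\cdot\rangle$. Let $(e_k)_{k\ge0}$ and $(f_k)_{k\ge0}$ be sequences in $H$ with $\langle e_j,f_k\rangle=0$ for $j\ne k$ and $\langle e_k,f_k\rangle\ne0$ for all $k$. Let $P_k(h):=\frac{\langle h,f_k\rangle}{\langle e_k,f_k\rangle}e_k$, so $\|P_k\|=\|e_k\|\|f_k\|/|\langle e_k,f_k\rangle|$. Let $A=(a_{nk})_{n,k\ge0}$ be complex scalars with $\sum_{k\ge0}|a_{nk}|\|P_k\|<\infty$ for each $n$, and define \[ S_n^A(h):=\sum_{k\ge0}a_{nk}\frac{\langle h,f_k\rangle}{\langle e_k,f_k\rangle}e_k,\qquad (S_n^A)^*(h)=\sum_{k\ge0}\overline{a_{nk}}\frac{\langle h,e_k\rangle}{\langle f_k,e_k\rangle}f_k. \] Then the following are equivalent: (i) $S_n^A(h)\to h$ weakly for all $h\in H$; (ii) $S_n^A(h)\to h$ in norm for all $h\in H$; (iii) $(S_n^A)^*(h)\to h$ weakly for all $h\in H$; (iv) $(S_n^A)^*(h)\to h$ in norm for all $h\in H$.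
   Context: $(S_n^A)^*$ is the Hilbert-space adjoint of $S_n^A$. *)

(* Defs.v *)
From HB Require Import structures.
From mathcomp Require Import all_boot all_order all_algebra.
From mathcomp Require Import complex.
From mathcomp Require Import reals.
Set Implicit Arguments. Unset Strict Implicit. Unset Printing Implicit Defensive.
Import Order.TTheory GRing.Theory Num.Theory.
Local Open Scope ring_scope.

Section Hilbert.
Variable R : realType.
Local Notation C := (R[i]).
Variable H : lmodType C.
Variable ip : H -> H -> C. (* <x, y>, linear in x, conjugate-linear in y *)

Definition hnorm (x : H) : R := Num.sqrt (complex.Re (ip x x)).

Definition cabs (z : C) : R := ComplexField.Normc.normc z.

Definition hilbert_space : Prop :=
  [/\ (forall (a : C) (x y z : H), ip (a *: x + y) z = a * ip x z + ip y z),
      (forall x y : H, ip y x = conjc (ip x y)),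
      (forall x : H, complex.Im (ip x x) = 0 /\ 0 <= complex.Re (ip x x)),
      (forall x : H, ip x x = 0 -> x = 0) &
      (forall u : nat -> H,
        (forall eps : R, 0 < eps -> exists N : nat, forall m n : nat,
           (N <= m)%N -> (N <= n)%N -> hnorm (u m - u n) < eps) ->
        exists l : H, forall eps : R, 0 < eps -> exists N : nat,
           forall n : nat, (N <= n)%N -> hnorm (u n - l) < eps)].

Definition norm_cvg (u : nat -> H) (l : H) : Prop :=
  forall eps : R, 0 < eps -> exists N : nat,
    forall n : nat, (N <= n)%N -> hnorm (u n - l) < eps.

Definition weak_cvg (u : nat -> H) (l : H) : Prop :=
  forall g : H, forall eps : R, 0 < eps -> exists N : nat,
    forall n : nat, (N <= n)%N -> cabs (ip (u n) g - ip l g) < eps.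

Definition has_sum (v : nat -> H) (s : H) : Prop :=
  norm_cvg (fun N => \sum_(k < N) v k) s.

End Hilbert.

(* Main.v *)
Require Import Defs.
From HB Require Import structures.
From mathcomp Require Import all_boot all_order all_algebra.
From mathcomp Require Import complex.
From mathcomp Require Import reals.
From mathcomp Require Import boolp classical_sets.
From mathcomp Require Import ring lra zify.
Import Order.TTheory GRing.Theory Num.Theory.
Local Open Scope ring_scope.

Module Helpers.
Local Open Scope complex_scope.
Set Implicit Arguments. Unset Strict Implicit. Unset Printing Implicit Defensive.

Section Cabs.
Variable R : realType.
Local Notation C := (R[i]).

Lemma cabsE (z : C) : cabs z = Num.sqrt (complex.Re z ^+ 2 + complex.Im z ^+ 2).
Proof. by case: z. Qed.

Lemma cabs_ge0 (z : C) : 0 <= cabs z.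
Proof. by rewrite cabsE sqrtr_ge0. Qed.

Lemma cabsM (x y : C) : cabs (x * y) = cabs x * cabs y.
Proof. exact: ComplexField.Normc.normcM. Qed.

Lemma cabsD (x y : C) : cabs (x + y) <= cabs x + cabs y.
Proof. exact: le_normcD. Qed.

Lemma cabsN (x : C) : cabs (- x) = cabs x.
Proof. exact: normcN. Qed.

Lemma cabsV (x : C) : cabs (x^-1) = (cabs x)^-1.
Proof. exact: ComplexField.Normc.normcV. Qed.

Lemma cabs0 : cabs (0 : C) = 0.
Proof. exact: ComplexField.Normc.normc0. Qed.

Lemma cabs1 : cabs (1 : C) = 1.
Proof. exact: ComplexField.Normc.normc1. Qed.

Lemma cabs_eq0 (x : C) : cabs x = 0 -> x = 0.
Proof. exact: ComplexField.Normc.eq0_normc. Qed.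

Lemma cabsJ (x : C) : cabs (conjc x) = cabs x.
Proof. by case: x => a b; rewrite /cabs /= sqrrN. Qed.

Lemma cabsR (r : R) : cabs (r%:C) = `|r|.
Proof. by rewrite cabsE /= expr0n /= addr0 sqrtr_sqr. Qed.

Lemma Re_le_cabs (z : C) : complex.Re z <= cabs z.
Proof.
rewrite cabsE; apply: (le_trans (ler_norm _)).
rewrite -(sqrtr_sqr (complex.Re z)) ler_wsqrtr // lerDl sqr_ge0 //.
Qed.

Lemma cabsB (x y : C) : cabs (x - y) = cabs (y - x).
Proof. by rewrite -cabsN opprB. Qed.

Lemma mulcJ (z : C) : z * conjc z = ((cabs z) ^+ 2)%:C.
Proof.
case: z => a b; rewrite /cabs /= sqr_sqrtr ?addr_ge0 ?sqr_ge0 //.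
by simpc; rewrite /= mulrC; congr (_ +i* _); ring.
Qed.

Lemma conjcM (x y : C) : conjc (x * y) = conjc x * conjc y.
Proof. exact: rmorphM. Qed.
End Cabs.


Section IP.
Variable R : realType.
Local Notation C := (R[i]).
Variable H : lmodType C.
Variable ip : H -> H -> C.
Hypothesis hs : hilbert_space ip.

Local Notation N := (hnorm ip).
Definition qn (x : H) : R := complex.Re (ip x x).

Lemma ip_lin a x y z : ip (a *: x + y) z = a * ip x z + ip y z.
Proof. by case: hs => h _ _ _ _; apply: h. Qed.
Lemma ip_sym x y : ip y x = conjc (ip x y).
Proof. by case: hs => _ h _ _ _; apply: h. Qed.
Lemma ip_pos x : complex.Im (ip x x) = 0 /\ 0 <= complex.Re (ip x x).
Proof. by case: hs => _ _ h _ _; apply: h. Qed.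
Lemma ip_def x : ip x x = 0 -> x = 0.
Proof. by case: hs => _ _ _ h _; apply: h. Qed.

Lemma ip0l z : ip 0 z = 0.
Proof.
have := ip_lin 1 0 0 z; rewrite scaler0 addr0 mul1r => h.
by apply: (addrI (ip 0 z)); rewrite addr0 -h.
Qed.
Lemma ipDl x y z : ip (x + y) z = ip x z + ip y z.
Proof. by rewrite -[x]scale1r ip_lin mul1r scale1r. Qed.
Lemma ipZl a x z : ip (a *: x) z = a * ip x z.
Proof. by rewrite -[a *: x]addr0 ip_lin ip0l addr0. Qed.
Lemma ipNl x z : ip (- x) z = - ip x z.
Proof. by rewrite -scaleN1r ipZl mulN1r. Qed.
Lemma ipBl x y z : ip (x - y) z = ip x z - ip y z.
Proof. by rewrite ipDl ipNl. Qed.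
Lemma ip0r z : ip z 0 = 0.
Proof. by rewrite ip_sym ip0l conjc0. Qed.
Lemma ipDr x y z : ip z (x + y) = ip z x + ip z y.
Proof. by rewrite ip_sym ipDl rmorphD /= -!ip_sym. Qed.
Lemma ipZr a x z : ip z (a *: x) = conjc a * ip z x.
Proof. by rewrite ip_sym ipZl rmorphM /= -ip_sym. Qed.
Lemma ipNr x z : ip z (- x) = - ip z x.
Proof. by rewrite ip_sym ipNl rmorphN /= -ip_sym. Qed.
Lemma ipBr x y z : ip z (x - y) = ip z x - ip z y.
Proof. by rewrite ipDr ipNr. Qed.

Lemma ip_suml (I : Type) (s : seq I) (F : I -> H) z :
  ip (\sum_(i <- s) F i) z = \sum_(i <- s) ip (F i) z.
Proof.
elim: s => [|a s IH]; first by rewrite !big_nil ip0l.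
by rewrite !big_cons ipDl IH.
Qed.

Lemma qn_ge0 x : 0 <= qn x.
Proof. by case: (ip_pos x). Qed.

Lemma ipxx x : ip x x = (qn x)%:C.
Proof. by rewrite /qn; case: (ip_pos x); case: (ip x x) => a b /= -> _. Qed.

Lemma N_ge0 x : 0 <= N x.
Proof. exact: sqrtr_ge0. Qed.

Lemma N_sqr x : N x ^+ 2 = qn x.
Proof. by rewrite /hnorm sqr_sqrtr // qn_ge0. Qed.

Lemma N_eq0 x : N x = 0 -> x = 0.
Proof.
move=> h; apply: ip_def; rewrite ipxx -N_sqr h expr0n /=; done.
Qed.

Lemma N0 : N 0 = 0.
Proof. by rewrite /hnorm /qn ip0l /= sqrtr0. Qed.

Lemma qnZ a x : qn (a *: x) = cabs a ^+ 2 * qn x.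
Proof.
rewrite /qn ipZl ipZr mulrA mulcJ ipxx.
by rewrite -rmorphM /=.
Qed.

Lemma NZ a x : N (a *: x) = cabs a * N x.
Proof.
rewrite /hnorm -/(qn _) qnZ sqrtrM ?sqr_ge0 // sqrtr_sqr ger0_norm //.
exact: cabs_ge0.
Qed.

Lemma NN x : N (- x) = N x.
Proof. by rewrite -scaleN1r NZ cabsN cabs1 mul1r. Qed.

Lemma NB x y : N (x - y) = N (y - x).
Proof. by rewrite -NN opprB. Qed.

Lemma qnD x y : qn (x + y) = qn x + qn y + 2 * complex.Re (ip x y).
Proof.
rewrite /qn ipDl !ipDr (ip_sym x y).
case: (ip x y) => a b /=; rewrite !raddfD /=; ring.
Qed.

Lemma CS x y : cabs (ip x y) <= N x * N y.
Proof.
have [y0|ny0] := eqVneq (qn y) 0.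
  have -> : y = 0 by apply: N_eq0; rewrite /hnorm -/(qn y) y0 sqrtr0.
  by rewrite ip0r cabs0 N0 mulr0.
have qy : 0 < qn y by rewrite lt_def ny0 qn_ge0.
set z := ip x y.
set t := z / (qn y)%:C.
have key : ip (x - t *: y) (x - t *: y) = (qn x)%:C - z * conjc z / (qn y)%:C.
  rewrite ipBl !ipBr !ipZl !ipZr -/z (ip_sym x y) -/z !ipxx /t.
  idtac.
  have tJ : conjc (z / (qn y)%:C) = conjc z / (qn y)%:C.
    clear t; rewrite -rmorphV ?unitfE ?(inj_eq (@complexI _)) //; case: z => a b; move: ((qn y)^-1) => c; simpc.
    by [].
  rewrite tJ.
  have qC : (qn y)%:C != 0 by rewrite (inj_eq (@complexI _)).
  field; done.
have := qn_ge0 (x - t *: y); rewrite /qn key mulcJ.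
rewrite -rmorphV ?unitfE // -rmorphM -rmorphB /= subr_ge0 => h.
have : cabs z ^+ 2 <= (N x * N y) ^+ 2.
  by rewrite exprMn !N_sqr -(@ler_pdivrMr _ (qn y)).
by rewrite ler_sqr ?nnegrE ?cabs_ge0 ?mulr_ge0 ?N_ge0.
Qed.

Lemma ND x y : N (x + y) <= N x + N y.
Proof.
have h : qn (x + y) <= (N x + N y) ^+ 2.
  rewrite qnD sqrrD !N_sqr.
  have := le_trans (Re_le_cabs _) (CS x y); lra.
by rewrite -(ler_sqr (N_ge0 _)) ?nnegrE ?addr_ge0 ?N_ge0 // N_sqr.
Qed.

Lemma NBtri x y z : N (x - z) <= N (x - y) + N (y - z).
Proof. by have := ND (x - y) (y - z); rewrite addrA subrK. Qed.

Lemma Nsum (I : Type) (s : seq I) (F : I -> H) :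
  N (\sum_(i <- s) F i) <= \sum_(i <- s) N (F i).
Proof.
elim: s => [|a s IH]; first by rewrite !big_nil N0.
rewrite !big_cons; apply: le_trans (ND _ _) _; exact: lerD.
Qed.

End IP.

Section IP2.
Variable R : realType.
Local Notation C := (R[i]).
Variable H : lmodType C.
Variable ip : H -> H -> C.
Hypothesis hs : hilbert_space ip.
Local Notation N := (hnorm ip).

Lemma qnN x : qn ip (- x) = qn ip x.
Proof. by rewrite -!(N_sqr hs) (NN hs). Qed.

Lemma parallelogram x y : qn ip (x + y) + qn ip (x - y) = 2 * qn ip x + 2 * qn ip y.
Proof.
rewrite !(qnD hs) qnN (ipNr hs).
have -> : complex.Re (- ip x y) = - complex.Re (ip x y) by case: (ip x y).
ring.
Qed.

Lemma cabs2 : cabs ((2%:R : R)%:C) = 2.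
Proof. by rewrite cabsR ger0_norm. Qed.

Lemma conjcD (x y : C) : conjc (x + y) = conjc x + conjc y.
Proof. by case: x => a b; case: y => c d; simpc. Qed.

Lemma conjcN (x : C) : conjc (- x) = - conjc x.
Proof. by case: x => a b; simpc. Qed.

Lemma conjcB (x y : C) : conjc (x - y) = conjc x - conjc y.
Proof. by rewrite conjcD conjcN. Qed.

Lemma conjc_sum (I : Type) (s : seq I) (F : I -> C) :
  conjc (\sum_(i <- s) F i) = \sum_(i <- s) conjc (F i).
Proof.
elim: s => [|i s IH]; first by rewrite !big_nil conjc0.
by rewrite !big_cons conjcD IH.
Qed.

Lemma conjcM' (x y : C) : conjc (x * y) = conjc x * conjc y.
Proof. by case: x => a b; case: y => c d; simpc; congr (_ +i* _); ring. Qed.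

Lemma conjcV' (x : C) : conjc (x^-1) = (conjc x)^-1.
Proof. exact: conjc_inv. Qed.

End IP2.


Lemma le_eps (R : realFieldType) (a b : R) : (forall eps, 0 < eps -> a <= b + eps) -> a <= b.
Proof.
move=> h; rewrite leNgt; apply/negP => ba.
have := h ((a - b) / 2); rewrite divr_gt0 ?subr_gt0 // => /(_ isT); lra.
Qed.

Lemma lt_eps0 (R : realFieldType) (a : R) : 0 <= a -> (forall eps, 0 < eps -> a < eps) -> a = 0.
Proof.
move=> a0 h; apply/eqP; rewrite eq_le a0 andbT; apply: le_eps => e e0.
by rewrite add0r ltW // h.
Qed.

Lemma mul_div_le (R : realFieldType) (a c : R) : 0 <= a -> 0 <= c -> c * (a / (c + 1)) <= a.
Proof. move=> a0 c0; have c1 : 0 < c + 1 by lra. by rewrite mulrA ler_pdivrMr //; nra. Qed.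

Section Cvg.
Variable R : realType.
Local Notation C := (R[i]).
Variable H : lmodType C.
Variable ip : H -> H -> C.
Hypothesis hs : hilbert_space ip.
Local Notation N := (hnorm ip).

Definition ccvg (u : nat -> C) (l : C) := forall eps : R, 0 < eps -> exists M : nat,
  forall n, (M <= n)%N -> cabs (u n - l) < eps.

Lemma ccvg_unique u l l' : ccvg u l -> ccvg u l' -> l = l'.
Proof.
move=> h1 h2; apply/eqP; rewrite -subr_eq0; apply/eqP/cabs_eq0.
apply: lt_eps0; first exact: cabs_ge0.
move=> e e0; have e2 : 0 < e / 2 by rewrite divr_gt0.
case: (h1 _ e2) => M1 H1; case: (h2 _ e2) => M2 H2.
have := H1 (maxn M1 M2) (leq_maxl _ _); have := H2 (maxn M1 M2) (leq_maxr _ _).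
set m := maxn M1 M2.
have -> : l - l' = (l - u m) + (u m - l') by rewrite addrA subrK.
move=> a b; apply: le_lt_trans (cabsD _ _) _; rewrite cabsB; lra.
Qed.

Lemma ccvg_const u l : (exists M, forall n, (M <= n)%N -> u n = l) -> ccvg u l.
Proof.
case=> M hM e e0; exists M => n /hM ->; by rewrite subrr cabs0.
Qed.

Lemma norm_cvg_unique u l l' : norm_cvg ip u l -> norm_cvg ip u l' -> l = l'.
Proof.
move=> h1 h2; apply/eqP; rewrite -subr_eq0; apply/eqP/(N_eq0 hs).
apply: lt_eps0; first exact: N_ge0.
move=> e e0; have e2 : 0 < e / 2 by rewrite divr_gt0.
case: (h1 _ e2) => M1 H1; case: (h2 _ e2) => M2 H2.
have := H1 (maxn M1 M2) (leq_maxl _ _); have := H2 (maxn M1 M2) (leq_maxr _ _).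
set m := maxn M1 M2.
have := NBtri hs l (u m) l'.
rewrite (NB hs l (u m)); lra.
Qed.

Lemma norm_cvg_ip u l g : norm_cvg ip u l -> ccvg (fun n => ip (u n) g) (ip l g).
Proof.
move=> h e e0.
have e1 : 0 < e / (N g + 1) by rewrite divr_gt0 // ltr_pwDr ?N_ge0.
case: (h _ e1) => M HM; exists M => n /HM hn.
rewrite -(ipBl hs); apply: le_lt_trans (CS hs _ _) _.
have ng := N_ge0 ip g.
have : N (u n - l) * N g <= e / (N g + 1) * N g.
  by rewrite ler_wpM2r // ltW.
move=> h2; apply: le_lt_trans h2 _.
rewrite mulrAC ltr_pdivrMr ?ltr_pwDr ?ltr01 //; nra.
Qed.

Lemma norm_to_weak u l : norm_cvg ip u l -> weak_cvg ip u l.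
Proof. by move=> h g; exact: norm_cvg_ip. Qed.

Lemma norm_cvg_ext u v l : (forall n, u n = v n) -> norm_cvg ip u l -> norm_cvg ip v l.
Proof. by move=> e h eps /h [M HM]; exists M => n /HM; rewrite e. Qed.

Lemma norm_cvg_lin u v l l' (t : C) :
  norm_cvg ip u l -> norm_cvg ip v l' ->
  norm_cvg ip (fun n => u n + t *: v n) (l + t *: l').
Proof.
move=> h1 h2 e e0.
have e2 : 0 < e / 2 by rewrite divr_gt0.
have e3 : 0 < e / 2 / (cabs t + 1) by rewrite divr_gt0 // ltr_pwDr ?cabs_ge0.
case: (h1 _ e2) => M1 H1; case: (h2 _ e3) => M2 H2.
exists (maxn M1 M2) => n hn.
have := H1 n (leq_trans (leq_maxl _ _) hn); have := H2 n (leq_trans (leq_maxr _ _) hn).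
have -> : u n + t *: v n - (l + t *: l') = (u n - l) + t *: (v n - l').
  by rewrite scalerBr; rewrite opprD !addrA; congr (_ - _); rewrite addrAC.
move=> a2 a1; apply: le_lt_trans (ND hs _ _) _; rewrite (NZ hs).
have ct := cabs_ge0 t; have nv := N_ge0 ip (v n - l').
have : cabs t * N (v n - l') <= cabs t * (e / 2 / (cabs t + 1)).
  by rewrite ler_wpM2l // ltW.
have : cabs t * (e / 2 / (cabs t + 1)) <= e / 2.
  by apply: mul_div_le; lra.
lra.
Qed.

Lemma has_sum_unique v s s' : has_sum ip v s -> has_sum ip v s' -> s = s'.
Proof. exact: norm_cvg_unique. Qed.

Lemma has_sum_ext v w s : (forall k, v k = w k) -> has_sum ip v s -> has_sum ip w s.
Proof.
move=> e; apply: norm_cvg_ext => n; exact: eq_bigr.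
Qed.

Lemma has_sum_lin v w s s' (t : C) : has_sum ip v s -> has_sum ip w s' ->
  has_sum ip (fun k => v k + t *: w k) (s + t *: s').
Proof.
move=> h1 h2; have := norm_cvg_lin t h1 h2; apply: norm_cvg_ext => n.
by rewrite big_split /= scaler_sumr.
Qed.

End Cvg.


Section UBP.
Variable R : realType.
Local Notation C := (R[i]).
Variable H : lmodType C.
Variable ip : H -> H -> C.
Hypothesis hs : hilbert_space ip.
Local Notation N := (hnorm ip).

Variable p : nat -> H -> R.
Hypothesis pD : forall n x y, p n (x + y) <= p n x + p n y.
Hypothesis pZ : forall n (t : C) x, p n (t *: x) = cabs t * p n x.
Hypothesis pK : forall n, exists K, forall x, p n x <= K * N x.
Hypothesis pB : forall x, exists B, forall n, p n x <= B.

Lemma p0 n : p n 0 = 0.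
Proof. by rewrite -(scale0r (0 : H)) pZ cabs0 mul0r. Qed.

Lemma pN n x : p n (- x) = p n x.
Proof. by rewrite -scaleN1r pZ cabsN cabs1 mul1r. Qed.

Lemma p_ge0 n x : 0 <= p n x.
Proof. have := pD n x (- x); rewrite subrr p0 pN; lra. Qed.

Lemma two_p n x : 2 * p n x <= p n (x + x).
Proof.
have -> : x + x = (2%:R : R)%:C *: x.
  have -> : ((2%:R : R)%:C : C) = 1 + 1 by apply/eqP; rewrite eq_complex /= addr0 !eqxx.
  by rewrite scalerDl scale1r.
by rewrite pZ cabsR ger0_norm.
Qed.

Lemma UBP : exists M, 0 <= M /\ forall n x, p n x <= M * N x.
Proof.
apply: contrapT => H0.
have big : forall Mr : R * R, exists nx : nat * H,
    0 < Mr.2 -> N nx.2 <= Mr.2 /\ Mr.1 < p nx.1 nx.2.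
  case=> M r /=; apply: contrapT => /forallNP hn.
  have [r0|r0] := boolP (0 < r); last first.
    by apply: (hn (0%N, 0)) => h; move: r0; rewrite h.
  apply: H0; exists (`|M| / r); split; first by rewrite divr_ge0 ?normr_ge0 ?ltW.
  move=> n x; rewrite leNgt; apply/negP => hx.
  have Nx0 : 0 < N x.
    rewrite lt_def N_ge0 andbT; apply/negP => /eqP /(N_eq0 hs) x0.
    by move: hx; rewrite x0 p0 /hnorm /qn (ip0l hs) /= sqrtr0 mulr0 ltxx.
  apply: (hn (n, (r / N x)%:C *: x)) => _ /=; split.
    rewrite (NZ hs) cabsR ger0_norm; last by rewrite divr_ge0 ?N_ge0 ?ltW.
    by rewrite divfK // lt0r_neq0.
  rewrite pZ cabsR ger0_norm; last by rewrite divr_ge0 ?N_ge0 ?ltW.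
  apply: (le_lt_trans (ler_norm M)).
  have : r / N x * (`|M| / r * N x) < r / N x * p n x.
    by rewrite ltr_pM2l // divr_gt0.
  apply: le_lt_trans; rewrite le_eqVlt; apply/orP; left; apply/eqP.
  by field; rewrite !gt_eqF.
case/choice: big => F HF.
case/choice: pK => K HK.
pose Kp n := `|K n|.
have HKp : forall n x, p n x <= Kp n * N x.
  move=> n x; apply: le_trans (HK n x) _; apply: ler_wpM2r; first exact: N_ge0.
  exact: ler_norm.
have Kp0 : forall n, 0 <= Kp n by move=> n; exact: normr_ge0.
pose step (j : nat) (st : H * R) :=
  let nx := F ((j.+1)%:R, st.2) in
  (if p nx.1 nx.2 <= p nx.1 (st.1 + nx.2) then st.1 + nx.2 else st.1 - nx.2,
   st.2 / (2 * (1 + Kp nx.1))).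
pose st := fix st (j : nat) : H * R := if j is j'.+1 then step j' (st j') else (0, 1).
pose xs j := (st j).1.
pose rs j := (st j).2.
pose ns j := (F ((j.+1)%:R, rs j)).1.
have rpos : forall j, 0 < rs j.
  elim=> [|j IH]; first by rewrite /rs /= ltr01.
  rewrite /rs /= -/(rs j) divr_gt0 // mulr_gt0 // ltr_pwDl //.
have rS : forall j, rs j.+1 = rs j / (2 * (1 + Kp (ns j))) by [].
have rhalf : forall j, rs j.+1 <= rs j / 2.
  move=> j; rewrite rS; have := rpos j; have := Kp0 (ns j).
  set k := Kp (ns j); set r := rs j => k0 r0.
  rewrite ler_pdivrMr; last by rewrite mulr_gt0 //; lra.
  have -> : r / 2 * (2 * (1 + k)) = r * (1 + k) by field.
  nra.
have rle1 : forall j, rs j <= (j.+1%:R)^-1.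
  elim=> [|j IH]; first by rewrite /rs /= invr1.
  apply: le_trans (rhalf j) _.
  have : rs j / 2 <= (j.+1%:R)^-1 / 2 by apply: ler_wpM2r; rewrite ?invr_ge0 ?ler0n.
  move/le_trans; apply.
  rewrite -invfM ler_pV2 ?inE ?unitfE ?mulr_gt0 ?pnatr_eq0 ?ltr0Sn //=.
  rewrite -natrM ler_nat; lia.
  by rewrite mulf_neq0 // pnatr_eq0.
have Kr : forall j, Kp (ns j) * (2 * rs j.+1) <= 1.
  move=> j; rewrite rS; have := rle1 j; have := rpos j; have := Kp0 (ns j).
  set k := Kp (ns j); set r := rs j => k0 r0 r1.
  have -> : k * (2 * (r / (2 * (1 + k)))) = r * (k / (1 + k)) by field; lra.
  have : k / (1 + k) <= 1 by rewrite ler_pdivrMr; lra.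
  have : 0 <= k / (1 + k) by rewrite divr_ge0 //; lra.
  have : (j.+1%:R)^-1 <= (1 : R) by rewrite invf_le1 ?ler1n ?ltr0Sn.
  move: (k / (1 + k)) => q; move: (j.+1%:R^-1 : R) r1 => s r1; nra.
have xstep : forall j, N (xs j.+1 - xs j) <= rs j.
  move=> j; have [h1 _] := HF ((j.+1)%:R, rs j) (rpos j).
  rewrite /xs /= -/(st j) -/(rs j); case: ifP => _.
    by rewrite addrC addKr.
  by rewrite addrC addKr (NN hs).
have pbig : forall j, (j.+1%:R) < p (ns j) (xs j.+1).
  move=> j; have [_ h2] := HF ((j.+1)%:R, rs j) (rpos j).
  move: h2; rewrite /xs /ns /= -/(st j) -/(rs j) /=.
  set n := (F _).1; set xi := (F _).2; set x := (st j).1 => h2.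
  case: ifP => [h|/negbT]; first by apply: lt_le_trans h.
  rewrite -ltNge => h.
  have := two_p n xi; have := pD n (x + xi) (- (x - xi)).
  have -> : x + xi + - (x - xi) = xi + xi.
    by rewrite opprB addrC -addrA addKr.
  rewrite pN; lra.
have cauchy0 : forall j i, N (xs (j + i)%N - xs j) <= 2 * rs j - 2 * rs (j + i)%N.
  move=> j; elim=> [|i IH]; first by rewrite addn0 subrr (N0 hs) subrr.
  rewrite addnS; apply: le_trans (NBtri hs _ (xs (j + i)%N) _) _.
  have := xstep (j + i)%N; have := rhalf (j + i)%N; lra.
have cauchy : forall j m, (j <= m)%N -> N (xs m - xs j) <= 2 * rs j.
  move=> j m /subnKC <-; apply: le_trans (cauchy0 j (m - j)%N) _.
  have := rpos (j + (m - j))%N; lra.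
have small : forall eps : R, 0 < eps -> exists j, 4 * rs j < eps.
  move=> e e0; exists (Num.bound (4 / e)).
  have := archi_boundP (ltW (divr_gt0 (ltr0Sn R 3) e0)).
  set b := Num.bound _ => hb.
  have hb1 : 4 / e < (b.+1)%:R by apply: lt_trans hb _; rewrite ltr_nat.
  have := rle1 b; move=> /(ler_wpM2l (ler0n R 4)) => h; apply: le_lt_trans h _.
  rewrite ltr_pdivrMr ?ltr0Sn // mulrC -ltr_pdivrMr //.
have [x hx] : exists x, forall eps : R, 0 < eps -> exists M, forall n, (M <= n)%N -> N (xs n - x) < eps.
  case: hs => _ _ _ _ comp; apply: comp => e e0.
  case: (small e e0) => j hj; exists j => m n hm hn.
  apply: le_lt_trans (NBtri hs _ (xs j) _) _.
  rewrite (NB hs (xs j)); have := cauchy j m hm; have := cauchy j n hn; lra.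
have xlim : forall j, N (xs j - x) <= 2 * rs j.
  move=> j; apply: le_eps => e e0; case: (hx e e0) => M hM.
  apply: le_trans (NBtri hs _ (xs (maxn M j)) _) _.
  rewrite (NB hs (xs j)); apply: lerD; first by apply: cauchy; exact: leq_maxr.
  by apply: ltW; apply: hM; exact: leq_maxl.
have pgt : forall j, (j%:R : R) < p (ns j) x.
  move=> j; have h1 := pbig j.
  have := pD (ns j) x (xs j.+1 - x); rewrite addrC subrK => h2.
  have h3 := HKp (ns j) (xs j.+1 - x).
  have h4 : Kp (ns j) * N (xs j.+1 - x) <= Kp (ns j) * (2 * rs j.+1).
    by rewrite ler_wpM2l // xlim.
  have := Kr j; rewrite -natr1; lra.
case: (pB x) => B hB.
have := archi_boundP (normr_ge0 B); set b := Num.bound _ => hb.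
have := pgt b; have := hB (ns b); have := ler_norm B; lra.
Qed.

End UBP.


Lemma mul_div_lt (R : realFieldType) (a c : R) : 0 < a -> 0 <= c -> c * (a / (c + 1)) < a.
Proof. move=> a0 c0; have c1 : 0 < c + 1 by lra. by rewrite mulrA ltr_pdivrMr //; nra. Qed.

Lemma ev_sum (R : realFieldType) (I : Type) (s : seq I) (u : I -> nat -> R) :
  (forall i eps, 0 < eps -> exists M, forall n, (M <= n)%N -> u i n < eps) ->
  forall eps, 0 < eps -> exists M, forall n, (M <= n)%N -> \sum_(i <- s) u i n < eps.
Proof.
move=> hu; elim: s => [|i s IH] eps e0.
  by exists 0%N => n _; rewrite big_nil.
have e2 : 0 < eps / 2 by rewrite divr_gt0.
case: (hu i _ e2) => M1 H1; case: (IH _ e2) => M2 H2.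
exists (maxn M1 M2) => n hn; rewrite big_cons.
have := H1 n (leq_trans (leq_maxl _ _) hn); have := H2 n (leq_trans (leq_maxr _ _) hn).
lra.
Qed.

Lemma ev_bound (R : realFieldType) (u : nat -> R) :
  (forall n, 0 <= u n) -> (exists M B, forall n, (M <= n)%N -> u n <= B) ->
  exists B, forall n, u n <= B.
Proof.
move=> u0 [M [B hB]].
have B0 : 0 <= B by apply: le_trans (u0 M) (hB M (leqnn M)).
exists (B + \sum_(m < M) u m) => n.
have s0 : 0 <= \sum_(m < M) u m by apply: sumr_ge0 => m _; exact: u0.
case: (leqP M n) => hn; first by have := hB n hn; lra.
have : u n <= \sum_(m < M) u m.
  rewrite (bigD1 (Ordinal hn)) //= lerDl; apply: sumr_ge0 => m _; exact: u0.
lra.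
Qed.

Lemma cabsn (R : realType) (n : nat) : cabs (n%:R : R[i]) = n%:R.
Proof.
have -> : (n%:R : R[i]) = (n%:R : R)%:C.
  elim: n => [|n IH]; first by [].
  by rewrite -addn1 !natrD IH /=; apply/eqP; rewrite eq_complex /= addr0 !eqxx.
by rewrite cabsR ger0_norm.
Qed.
Lemma zid (V : zmodType) (h v y c : V) : h - (y + c) = (h - v - c) + (v - y).
Proof. by rewrite [RHS]addrAC subrKA opprD addrA. Qed.
Lemma zid2 (V : zmodType) (h y1 y2 : V) : (h - y1) + (h - y2) = (h + h) - (y1 + y2).
Proof. by rewrite addrACA opprD. Qed.

Section Main.
Variable R : realType.
Local Notation C := (R[i]).
Variable H : lmodType C.
Variable ip : H -> H -> C.
Hypothesis hs : hilbert_space ip.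
Local Notation N := (hnorm ip).

Lemma norm_cvg_evconst (u : nat -> H) l :
  (exists M, forall n, (M <= n)%N -> u n = l) -> norm_cvg ip u l.
Proof.
case=> M hM e e0; exists M => n /hM ->; by rewrite subrr (N0 hs).
Qed.

Variables (e f : nat -> H) (a : nat -> nat -> C) (S : nat -> H -> H).
Hypothesis biorth : forall j k : nat, j <> k -> ip (e j) (f k) = 0.
Hypothesis nz : forall k : nat, ip (e k) (f k) != 0.
Hypothesis summ : forall n : nat, exists M : R, forall Nn : nat,
     \sum_(k < Nn) cabs (a n k) * (N (e k) * N (f k) / cabs (ip (e k) (f k))) <= M.
Hypothesis hasS : forall (n : nat) (h : H),
     has_sum ip (fun k => (a n k * (ip h (f k) / ip (e k) (f k))) *: e k) (S n h).

Lemma S_lin n x y t : S n (x + t *: y) = S n x + t *: S n y.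
Proof.
apply: (has_sum_unique hs (hasS n (x + t *: y))).
apply: has_sum_ext (has_sum_lin hs t (hasS n x) (hasS n y)) => k.
rewrite (ipDl hs) (ipZl hs) !scalerA -scalerDl; congr (_ *: _); ring.
Qed.

Lemma S0 n : S n 0 = 0.
Proof.
have := S_lin n 0 0 1; rewrite scaler0 addr0 scale1r => h.
by apply: (addrI (S n 0)); rewrite addr0 -h.
Qed.

Lemma SD n x y : S n (x + y) = S n x + S n y.
Proof. by have := S_lin n x y 1; rewrite !scale1r. Qed.

Lemma SZ n t x : S n (t *: x) = t *: S n x.
Proof. by rewrite -[t *: x]add0r S_lin S0 add0r. Qed.

Lemma SB n x y : S n (x - y) = S n x - S n y.
Proof. by rewrite -scaleN1r S_lin scaleN1r. Qed.

Lemma S_e n j : S n (e j) = a n j *: e j.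
Proof.
apply: (has_sum_unique hs (hasS n (e j))).
apply: norm_cvg_evconst; exists j.+1 => m hm.
rewrite (bigD1 (Ordinal hm)) //= big1 ?addr0.
  by rewrite divff // mulr1.
move=> k hk; rewrite biorth ?mul0r ?mulr0 ?scale0r //.
move=> jk; move: hk; apply/negP; rewrite negbK; apply/eqP/val_inj => /=.
by rewrite jk.
Qed.

Lemma cabs_c_gt0 k : 0 < cabs (ip (e k) (f k)).
Proof.
rewrite lt_def cabs_ge0 andbT; apply/negP => /eqP /cabs_eq0 h.
by move: (nz k); rewrite h eqxx.
Qed.

Lemma S_bound n : exists K, forall x, N (S n x) <= K * N x.
Proof.
case: (summ n) => M hM; exists M => x.
apply: le_eps => eps e0.
case: (hasS n x e0) => Nn hN.
have h1 := hN Nn (leqnn Nn).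
set P := \sum_(k < Nn) _ in h1.
have h2 : N (S n x) <= N P + N (P - S n x).
  by have := ND hs P (S n x - P); rewrite addrC subrK (NB hs P).
have h3 : N P <= M * N x.
  apply: le_trans (Nsum hs _ _) _.
  apply: le_trans (ler_wpM2r (N_ge0 ip x) (hM Nn)); rewrite mulr_suml.
  apply: ler_sum => k _.
  rewrite (NZ hs) cabsM cabsM cabsV.
  have c0 := cabs_c_gt0 k.
  have := CS hs x (f k); have := cabs_ge0 (a n k); have := N_ge0 ip (e k).
  have := N_ge0 ip (f k); have := N_ge0 ip x.
  move: (cabs (a n k)) (cabs (ip x (f k))) (N x) (N (e k)) (N (f k)) (cabs (ip (e k) (f k))) c0.
  move=> A Z X E F Cc c0 X0 F0 E0 A0 Z0.
  have -> : A * (Z * Cc^-1) * E = (A * E * Cc^-1) * Z by ring.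
  have -> : A * (E * F / Cc) * X = (A * E * Cc^-1) * (X * F) by ring.
  apply: ler_wpM2l => //; rewrite !mulr_ge0 // invr_ge0 ltW //.
lra.
Qed.

Definition comb (s : seq (C * nat)) : H := \sum_(p <- s) p.1 *: e p.2.

Lemma comb_cat s1 s2 : comb (s1 ++ s2) = comb s1 + comb s2.
Proof. by rewrite /comb big_cat. Qed.

Lemma comb_scale (t : C) s : comb [seq (t * p.1, p.2) | p <- s] = t *: comb s.
Proof.
rewrite /comb big_map scaler_sumr; apply: eq_bigr => p _; by rewrite scalerA.
Qed.

Lemma comb1 k : comb [:: (1, k)] = e k.
Proof. by rewrite /comb big_cons big_nil addr0 scale1r. Qed.

Lemma annih w : (forall k, ip w (e k) = 0) -> forall n x, ip (S n x) w = 0.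
Proof.
move=> hw n x; apply: (ccvg_unique (norm_cvg_ip hs w (hasS n x))).
apply: ccvg_const; exists 0%N => m _.
rewrite (ip_suml hs) big1 // => k _.
by rewrite (ipZl hs) (ip_sym hs w (e k)) hw conjc0 mulr0.
Qed.

Lemma density (W : forall h, weak_cvg ip (fun n => S n h) h) h eps :
  0 < eps -> exists s, N (h - comb s) < eps.
Proof.
move=> eps0.
pose E : set R := fun r => exists s, r = N (h - comb s).
have Ene : nonempty E by exists (N (h - comb [::])); exists [::].
have Elb : lbound E 0 by move=> r [s ->]; exact: N_ge0.
have hinf : has_inf E by split => //; exists 0.
set d := inf E.
have dle : forall s, d <= N (h - comb s).
  by move=> s; apply: (ge_inf hinf.2); exists s.
have d0 : 0 <= d by apply: lb_le_inf.
have approx : forall m : nat, exists s, N (h - comb s) < d + (m.+1%:R)^-1.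
  move=> m; have := @inf_adherent R E (m.+1%:R)^-1; rewrite invr_gt0 ltr0Sn.
  by case/(_ isT hinf) => r [s ->] hr; exists s.
case/choice: approx => ys hys.
pose y m := comb (ys m).
pose dl (m : nat) : R := (m.+1%:R)^-1.
have dl0 : forall m, 0 < dl m by move=> m; rewrite invr_gt0 ltr0Sn.
have dlmono : forall j m, (j <= m)%N -> dl m <= dl j.
  move=> j m hjm; rewrite /dl lef_pV2 ?posrE ?ltr0Sn // ler_nat; lia.
have dl1 : forall m, dl m <= 1 by move=> m; apply: le_trans (dlmono 0%N m (leq0n m)) _; rewrite /dl invr1.
have par : forall m l, qn ip (y m - y l) <= 2 * (d + dl m) ^+ 2 + 2 * (d + dl l) ^+ 2 - 4 * d ^+ 2.
  move=> m l.
  have hp := parallelogram hs (h - y m) (h - y l).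
  have e1 : h - y m - (h - y l) = - (y m - y l) by rewrite opprB addrC subrKA opprB.
  rewrite e1 (qnN hs) in hp.
  pose mid := comb [seq ((2%:R : C)^-1 * p.1, p.2) | p <- ys m ++ ys l].
  have hmid : h - y m + (h - y l) = (2%:R : C) *: (h - mid).
    rewrite /mid comb_scale comb_cat scalerBr scalerA divff ?pnatr_eq0 // scale1r.
    by rewrite zid2 scaler_nat mulr2n.
  rewrite hmid (qnZ hs) cabsn in hp.
  have h1 : d ^+ 2 <= qn ip (h - mid).
    by rewrite -(N_sqr hs) ler_sqr ?nnegrE ?N_ge0 //; apply: dle.
  have h2 : qn ip (h - y m) <= (d + dl m) ^+ 2.
    rewrite -(N_sqr hs) ler_sqr ?nnegrE ?N_ge0 //; last by have := dl0 m; lra.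
    exact: ltW (hys m).
  have h3 : qn ip (h - y l) <= (d + dl l) ^+ 2.
    rewrite -(N_sqr hs) ler_sqr ?nnegrE ?N_ge0 //; last by have := dl0 l; lra.
    exact: ltW (hys l).
  move: hp h1 h2 h3; move: (qn ip (h - mid)) (qn ip (h - y m)) (qn ip (h - y l)) (qn ip (y m - y l)).
  move=> a1 a2 a3 a4; rewrite expr2 => hp h1 h2 h3. nra.
have cauchy : forall eps, 0 < eps -> exists j, forall m l, (j <= m)%N -> (j <= l)%N -> N (y m - y l) < eps.
  move=> ep ep0.
  have ep2 : 0 < ep ^+ 2 by rewrite exprn_gt0.
  have bnd0 : 0 <= (8 * d + 4) / ep ^+ 2 by rewrite divr_ge0 // ?ltW //; lra.
  have := archi_boundP bnd0; set j := Num.bound _ => hj.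
  have hj2 : (8 * d + 4) * dl j < ep ^+ 2.
    have hj' : (8 * d + 4) / ep ^+ 2 < (j.+1)%:R by apply: lt_trans hj _; rewrite ltr_nat.
    rewrite /dl ltr_pdivrMr ?ltr0Sn // [ep ^+ 2 * _]mulrC -ltr_pdivrMr //.
  exists j => m l hm hl.
  have := par m l; have := dlmono _ _ hm; have := dlmono _ _ hl; have := dl0 m; have := dl0 l.
  have := dl1 j; have := dl0 j.
  rewrite -(N_sqr hs).
  move: (dl m) (dl l) (dl j) (N (y m - y l)) (N_ge0 ip (y m - y l)) hj2.
  move=> a1 a2 a3 a4 a40 hj2 b1 b2 b3 b4 b5 b6 b7.
  rewrite ltNge; apply/negP => hc.
  have : ep ^+ 2 <= a4 ^+ 2 by rewrite ler_sqr ?nnegrE // ltW.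
  nra.
have [v hv] : exists v, forall eps, 0 < eps -> exists M, forall n, (M <= n)%N -> N (y n - v) < eps.
  case: hs => _ _ _ _ comp; apply: comp => ep ep0.
  by case: (cauchy ep ep0) => j hj; exists j.
pose w := h - v.
have Nw : N w <= d.
  apply: le_eps => ep ep0.
  have ep2 : 0 < ep / 2 by rewrite divr_gt0.
  case: (hv _ ep2) => M hM.
  have hpos : 0 <= (ep / 2)^-1 by rewrite invr_ge0 ltW.
  have := archi_boundP hpos; set j := Num.bound _ => hj.
  set m := maxn M j.
  have hdl : dl m < ep / 2.
    apply: le_lt_trans (dlmono _ _ (leq_maxr M j)) _.
    rewrite /dl -[ep / 2]invrK ltf_pV2 ?posrE ?ltr0Sn ?invr_gt0 //.
    by apply: lt_trans hj _; rewrite ltr_nat.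
  have h1 := hys m; rewrite -/(y m) -/(dl m) in h1.
  have := hM m (leq_maxl _ _); have := NBtri hs h (y m) v; rewrite -/w; lra.
have Nwt : forall s t, d <= N (w - t *: comb s).
  move=> s t; apply: le_eps => ep ep0.
  case: (hv _ ep0) => M hM.
  have := dle (ys M ++ [seq (t * p.1, p.2) | p <- s]).
  rewrite comb_cat comb_scale -/(y M) (zid h v) => h1.
  apply: le_trans h1 _; apply: le_trans (ND hs _ _) _.
  by rewrite lerD2l (NB hs v) ltW // hM.
have qle : forall s t, qn ip w <= qn ip (w - t *: comb s).
  move=> s t; rewrite -!(N_sqr hs) ler_sqr ?nnegrE ?N_ge0 //.
  exact: le_trans Nw (Nwt s t).
have orth : forall k, ip w (e k) = 0.
  move=> k; set z := ip w (e k).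
  set qc := qn ip (e k).
  have qc0 : 0 <= qc by apply: qn_ge0.
  set sr := (qc + 1)^-1.
  have sr0 : 0 < sr by rewrite invr_gt0; lra.
  have srq : sr * qc < 1 by rewrite mulrC ltr_pdivrMr; lra.
  have := qle [:: (1, k)] (sr%:C * z); rewrite comb1.
  rewrite (qnD hs w) (qnN hs) (qnZ hs) (ipNr hs) (ipZr hs) -/z -/qc.
  rewrite conjcM' conjc_real cabsM cabsR (ger0_norm (ltW sr0)).
  have -> : complex.Re (- (sr%:C * conjc z * z)) = - (sr * cabs z ^+ 2).
    rewrite -mulrA [conjc z * z]mulrC mulcJ.
    by move: (cabs z ^+ 2) => Z /=; rewrite mulr0 subr0.
  move=> hq; apply: cabs_eq0.
  have z0 := cabs_ge0 z.
  have : cabs z ^+ 2 <= 0.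
    move: hq; rewrite exprMn; move: (cabs z ^+ 2) (sqr_ge0 (cabs z)) => Z Z0 hq.
    have E2 : sr ^+ 2 * Z * qc + 2 * - (sr * Z) = sr * Z * (sr * qc - 2) by ring.
    rewrite -addrA E2 lerDl in hq.
    move: hq srq; move: (sr * qc) => u hq hu.
    have hP : sr * Z <= 0.
      move: hq; move: (sr * Z) => P hq; nra.
    nra.
  move=> hz; apply/eqP; rewrite -sqrf_eq0 eq_le hz sqr_ge0 //.
have w0 : w = 0.
  apply: (ip_def hs); apply: ccvg_unique (W w w) _.
  apply: ccvg_const; exists 0%N => n _; exact: annih.
have hveq : v = h by apply/eqP; rewrite eq_sym -subr_eq0 -/w w0.
case: (hv eps eps0) => M hM; exists (ys M).
by rewrite -hveq (NB hs) hM.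
Qed.

Lemma W2N (W : forall h, weak_cvg ip (fun n => S n h) h) h :
  norm_cvg ip (fun n => S n h) h.
Proof.
have aconv : forall j eps, 0 < eps -> exists M, forall n, (M <= n)%N -> cabs (a n j - 1) < eps.
  move=> j ep ep0; have c0 := cabs_c_gt0 j.
  case: (W (e j) (f j) _ (mulr_gt0 ep0 c0)) => M hM; exists M => n /hM.
  by rewrite S_e (ipZl hs) -{2}[ip (e j) (f j)]mul1r -mulrBl cabsM ltr_pM2r.
have pbd : forall x, exists B, forall n, N (S n x) <= B.
  move=> x.
  have := @UBP R H ip hs (fun n g => cabs (ip g (S n x))).
  case.
  - by move=> n y z /=; rewrite (ipDl hs); exact: cabsD.
  - by move=> n t y /=; rewrite (ipZl hs) cabsM.
  - by move=> n; exists (N (S n x)) => g; rewrite mulrC; exact: CS hs _ _.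
  - move=> g; apply: ev_bound; first by move=> n; exact: cabs_ge0.
    case: (W x g _ ltr01) => M hM; exists M, (cabs (ip x g) + 1) => n /hM h1.
    rewrite (ip_sym hs) cabsJ.
    have := cabsD (ip (S n x) g - ip x g) (ip x g); rewrite subrK; lra.
  move=> M [M0 hM]; exists M => n; have := hM n (S n x).
  rewrite (ipxx hs) cabsR ger0_norm ?(qn_ge0 hs) // -(N_sqr hs).
  have := N_ge0 ip (S n x); move: (N (S n x)) => X X0 h1; nra.
have [M [M0 hM]] : exists M, 0 <= M /\ forall n x, N (S n x) <= M * N x.
  apply: (@UBP R H ip hs (fun n x => N (S n x))).
  - by move=> n y z /=; rewrite SD; exact: ND.
  - by move=> n t y /=; rewrite SZ (NZ hs).
  - exact: S_bound.
  - exact: pbd.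
have hcomb : forall s eps, 0 < eps -> exists M0, forall n, (M0 <= n)%N -> N (S n (comb s) - comb s) < eps.
  move=> s.
  have eqS : forall n, S n (comb s) - comb s = \sum_(p <- s) ((p.1 * (a n p.2 - 1)) *: e p.2).
    move=> n; rewrite /comb; elim: s => [|p s IH]; first by rewrite !big_nil S0 subrr.
    rewrite !big_cons SD SZ S_e -IH scalerA mulrBr mulr1 scalerBl.
    by rewrite opprD addrACA.
  move=> ep ep0.
  have hu : forall (p : C * nat) ep', 0 < ep' -> exists M1, forall n, (M1 <= n)%N ->
      cabs p.1 * cabs (a n p.2 - 1) * N (e p.2) < ep'.
    move=> p ep' ep'0.
    set c := cabs p.1 * N (e p.2).
    have c0 : 0 <= c by rewrite mulr_ge0 ?cabs_ge0 ?N_ge0.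
    have c1 : 0 < ep' / (c + 1) by rewrite divr_gt0 //; lra.
    case: (aconv p.2 _ c1) => M1 hM1; exists M1 => n /hM1 h1.
    have -> : cabs p.1 * cabs (a n p.2 - 1) * N (e p.2) = c * cabs (a n p.2 - 1).
      by rewrite /c; ring.
    apply: le_lt_trans (mul_div_lt ep'0 c0).
    by rewrite ler_wpM2l // ltW.
  have := @ev_sum R _ s (fun p n => cabs p.1 * cabs (a n p.2 - 1) * N (e p.2)) hu _ ep0.
  case=> M2 hM2; exists M2 => n /hM2 h1; rewrite eqS.
  apply: le_lt_trans (Nsum hs _ _) _; apply: le_lt_trans h1.
  by apply: ler_sum => p _; rewrite (NZ hs) cabsM.
move=> ep ep0.
set dd := ep / (M + 3).
have dd0 : 0 < dd by rewrite divr_gt0 //; lra.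
have hd : (M + 3) * dd = ep by rewrite /dd mulrC divfK //; apply/lt0r_neq0; lra.
case: (density W h dd0) => s hs1.
case: (hcomb s dd dd0) => M1 hM1; exists M1 => n /hM1 h2.
have E1 : S n h - h = S n (h - comb s) + (S n (comb s) - comb s) + (comb s - h).
  by rewrite SB subrKA subrKA.
rewrite E1; apply: le_lt_trans (ND hs _ _) _.
have h3 := ND hs (S n (h - comb s)) (S n (comb s) - comb s).
have h4 := hM n (h - comb s).
have h5 : M * N (h - comb s) <= M * dd by rewrite ler_wpM2l // ltW.
rewrite (NB hs (comb s)).
have : (M + 2) * dd < ep by rewrite -hd ltr_pM2r //; lra.
lra.
Qed.

Variable Sadj : nat -> H -> H.
Hypothesis hasA : forall (n : nat) (h : H),
  has_sum ip (fun k => (conjc (a n k) * (ip h (e k) / ip (f k) (e k))) *: f k) (Sadj n h).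

Lemma ccvg_ext (u v : nat -> C) l : (forall n, u n = v n) -> ccvg u l -> ccvg v l.
Proof. by move=> E1 h ep /h [M hM]; exists M => n /hM; rewrite E1. Qed.

Lemma ccvg_conj (u : nat -> C) l : ccvg u l -> ccvg (fun n => conjc (u n)) (conjc l).
Proof. by move=> h ep /h [M hM]; exists M => n /hM; rewrite -conjcB cabsJ. Qed.

Lemma adj n h g : ip (S n h) g = ip h (Sadj n g).
Proof.
have c1 := norm_cvg_ip hs g (hasS n h).
have c2 := ccvg_conj (norm_cvg_ip hs h (hasA n g)).
rewrite (ip_sym hs (Sadj n g) h).
apply: (ccvg_unique c1); apply: ccvg_ext c2 => m /=.
rewrite !(ip_suml hs) conjc_sum; apply: eq_bigr => k _.
rewrite !(ipZl hs) !conjcM' conjcV' conjcK -!(ip_sym hs).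
by ring.
Qed.

End Main.


End Helpers.
Import Helpers.

Theorem theorem6p2 (R : realType) (H : lmodType (R[i])) (ip : H -> H -> R[i])
  (e f : nat -> H) (a : nat -> nat -> R[i])
  (S Sadj : nat -> H -> H) :
  hilbert_space ip ->
  (forall j k : nat, j <> k -> ip (e j) (f k) = 0) ->
  (forall k : nat, ip (e k) (f k) != 0) ->
  (* sum_k |a_nk| ||P_k|| < oo, with ||P_k|| = ||e_k|| ||f_k|| / |<e_k,f_k>| *)
  (forall n : nat, exists M : R, forall N : nat,
     \sum_(k < N) cabs (a n k) * (hnorm ip (e k) * hnorm ip (f k) / cabs (ip (e k) (f k)))
       <= M) ->
  (* S_n^A(h) = sum_k a_nk <h,f_k>/<e_k,f_k> e_k *)
  (forall (n : nat) (h : H),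
     has_sum ip (fun k => (a n k * (ip h (f k) / ip (e k) (f k))) *: e k) (S n h)) ->
  (* (S_n^A)^*(h) = sum_k conj(a_nk) <h,e_k>/<f_k,e_k> f_k *)
  (forall (n : nat) (h : H),
     has_sum ip (fun k => (conjc (a n k) * (ip h (e k) / ip (f k) (e k))) *: f k)
       (Sadj n h)) ->
  [/\ ((forall h : H, weak_cvg ip (fun n => S n h) h) <->
       (forall h : H, norm_cvg ip (fun n => S n h) h)),
      ((forall h : H, norm_cvg ip (fun n => S n h) h) <->
       (forall h : H, weak_cvg ip (fun n => Sadj n h) h)) &
      ((forall h : H, weak_cvg ip (fun n => Sadj n h) h) <->
       (forall h : H, norm_cvg ip (fun n => Sadj n h) h))].
Proof.
move=> hs biorth nz summ hasS hasA.
have biorth' : forall j k : nat, j <> k -> ip (f j) (e k) = 0.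
  by move=> j k jk; rewrite (ip_sym hs) biorth ?conjc0 // => kj; apply: jk.
have nz' : forall k : nat, ip (f k) (e k) != 0.
  by move=> k; rewrite (ip_sym hs) conjc_eq0.
have summ' : forall n : nat, exists M : R, forall N : nat,
     \sum_(k < N) cabs (conjc (a n k)) * (hnorm ip (f k) * hnorm ip (e k) / cabs (ip (f k) (e k)))
       <= M.
  move=> n; case: (summ n) => M hM; exists M => N0; apply: le_trans (hM N0).
  rewrite le_eqVlt; apply/orP; left; apply/eqP; apply: eq_bigr => k _.
  by rewrite cabsJ (ip_sym hs (e k) (f k)) cabsJ [hnorm ip (f k) * _]mulrC.
have hasA' : forall (n : nat) (h : H),
     has_sum ip (fun k => (conjc (a n k) * (ip h (e k) / ip (f k) (e k))) *: f k) (Sadj n h).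
  exact: hasA.
have hasS' : forall (n : nat) (h : H),
     has_sum ip (fun k => (conjc (conjc (a n k)) * (ip h (f k) / ip (e k) (f k))) *: e k) (S n h).
  by move=> n h; apply: has_sum_ext (hasS n h) => k; rewrite conjcK.
have WS := W2N hs biorth nz summ hasS.
have WA := W2N hs biorth' nz' summ' hasA.
have adjE := adj hs hasS hasA.
have SA : (forall h, weak_cvg ip (fun n => S n h) h) -> (forall h, weak_cvg ip (fun n => Sadj n h) h).
  move=> W h g ep ep0; case: (W g h _ ep0) => M hM; exists M => n /hM.
  by move=> hn; rewrite (ip_sym hs g (Sadj n h)) -adjE (ip_sym hs g h) -conjcB cabsJ.
have AS : (forall h, weak_cvg ip (fun n => Sadj n h) h) -> (forall h, weak_cvg ip (fun n => S n h) h).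
  move=> W h g ep ep0; case: (W g h _ ep0) => M hM; exists M => n /hM.
  by move=> hn; rewrite adjE (ip_sym hs (Sadj n g) h) (ip_sym hs g h) -conjcB cabsJ.
split; split.
- exact: WS.
- by move=> hn h; apply: norm_to_weak.
- by move=> hn; apply: SA => h; apply: norm_to_weak.
- by move=> W; apply: WS; apply: AS.
- exact: WA.
- by move=> hn h; apply: norm_to_weak.
Qed.
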